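(* Let $d\in\mathbb{N}$. Then $$\mathrm{WA} = \pi(\Pi) \qquad\text{and hence}\qquad \mathrm{Bad} = \mathbb{R}^d\setminus \pi(\Pi).$$
   Context: For $z\in\mathbb{R}^d$, $\|z\|$ denotes the sup-norm distance from $z$ to $\mathbb{Z}^d$. Write $\mathbb{N}=\{1,2,3,\dots\}$. $\mathrm{Bad}=\{x\in\mathbb{R}^d : \inf_{n\in\mathbb{N}} n\|nx\|^d>0\}$ is the set of badly approximable vectors, and $\mathrm{WA}=\mathbb{R}^d\setminus\mathrm{Bad}$. For $\psi:\mathbb{N}\to\mathbb{R}_{\ge 0}$, let $W(\psi)$ be the set of pairs $(x,y)\in\mathbb{R}^d\times\mathbb{R}^d$ for which $\|nx+y\|<\psi(n)$ holds for infinitely many $n\in\mathbb{N}$. $\mathcal{D}$ is the set of all non-increasing $\psi:\mathbb{N}\to\mathbb{R}_{\ge0}$ such that $\sum_n\psi(n)^d$ diverges, and $\Pi=\bigcap_{\psi\in\mathcal{D}}W(\psi)$. $\pi:\mathbb{R}^d\times\mathbb{R}^d\to\mathbb{R}^d$ is the projection $\pi(x,y)=x$. *)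

(* Defs.v *)
From HB Require Import structures.
From mathcomp Require Import all_boot all_order all_algebra.
From mathcomp Require Import all_classical all_reals.
Set Implicit Arguments. Unset Strict Implicit. Unset Printing Implicit Defensive.
Import Order.TTheory GRing.Theory Num.Theory.
Local Open Scope ring_scope.
Local Open Scope classical_set_scope.

Definition distZ (R : realType) (t : R) : R :=
  Num.min (t - (Num.floor t)%:~R) ((Num.floor t)%:~R + 1 - t).

Definition distZd (R : realType) (d : nat) (z : 'I_d -> R) : R :=
  \big[Num.max/0]_(i < d) distZ (z i).

Definition nscale (R : realType) (d : nat) (n : nat) (x : 'I_d -> R) : 'I_d -> R :=
  fun i => n%:R * x i.

Definition Bad (R : realType) (d : nat) : set ('I_d -> R) :=
  [set x | exists c : R, 0 < c /\
     forall n : nat, (0 < n)%N -> c <= n%:R * (distZd (nscale n x)) ^+ d].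

Definition WA (R : realType) (d : nat) : set ('I_d -> R) := ~` @Bad R d.

Definition W (R : realType) (d : nat) (psi : nat -> R) :
    set (('I_d -> R) * ('I_d -> R)) :=
  [set p | forall N : nat, exists n : nat, (N < n)%N /\
     distZd (fun i => n%:R * p.1 i + p.2 i) < psi n].

(* D: non-increasing psi : N -> R_{>=0} with sum_n psi(n)^d divergent.
   psi is a function on nat whose value at 0 is irrelevant (N = {1,2,...}). *)
Definition Dset (R : realType) (d : nat) : set (nat -> R) :=
  [set psi | (forall n : nat, (0 < n)%N -> 0 <= psi n)
     /\ (forall m n : nat, (0 < m)%N -> (m <= n)%N -> psi n <= psi m)
     /\ (forall M : R, exists N : nat, M < \sum_(1 <= k < N) (psi k) ^+ d)].

Definition PiSet (R : realType) (d : nat) : set (('I_d -> R) * ('I_d -> R)) :=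
  [set p | forall psi, @Dset R d psi -> @W R d psi p].

Definition piPi (R : realType) (d : nat) : set ('I_d -> R) :=
  fst @` @PiSet R d.

(* Main.v *)
Require Import Defs.
From mathcomp Require Import all_boot all_order all_algebra.
From mathcomp Require Import all_classical all_reals.
From mathcomp Require Import ring lra zify.
Import Order.TTheory GRing.Theory Num.Theory.
Local Open Scope ring_scope.
Local Open Scope classical_set_scope.
Set Implicit Arguments. Unset Strict Implicit.

Lemma distZ_ge0 (R : realType) (t : R) : 0 <= distZ t.
Proof.
rewrite /distZ le_min; apply/andP; split.
  by rewrite subr_ge0 floor_le.
have := floorD1_gt t; rewrite intrD => h; rewrite subr_ge0 ltW //.
Qed.

Lemma distZ_le (R : realType) (t : R) (z : int) : distZ t <= `|t - z%:~R|.
Proof.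
rewrite /distZ.
have [hz|hz] := lerP z (Num.floor t).
  rewrite ge_min; apply/orP; left.
  have h1 : (z%:~R : R) <= (Num.floor t)%:~R by rewrite ler_int.
  have h2 := floor_le t.
  apply: le_trans (ler_norm _); lra.
rewrite ge_min; apply/orP; right.
have h1 : ((Num.floor t + 1)%:~R : R) <= z%:~R by rewrite ler_int; lia.
move: h1; rewrite intrD => h1.
rewrite distrC; apply: le_trans (ler_norm _); lra.
Qed.

Lemma distZ_eq (R : realType) (t : R) : exists z : int, distZ t = `|t - z%:~R|.
Proof.
rewrite /distZ.
have h2 := floor_le t.
have := floorD1_gt t; rewrite intrD => h3.
have [hm|hm] := leP (t - (Num.floor t)%:~R) ((Num.floor t)%:~R + 1 - t).
  exists (Num.floor t); rewrite ger0_norm //; lra.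
exists (Num.floor t + 1); rewrite intrD distrC ger0_norm //; lra.
Qed.

Lemma distZ_sub (R : realType) (u v : R) : distZ (u - v) <= distZ u + distZ v.
Proof.
have [zu ->] := distZ_eq u; have [zv ->] := distZ_eq v.
apply: le_trans (distZ_le _ (zu - zv)) _.
rewrite intrB.
have -> : u - v - (zu%:~R - zv%:~R) = (u - zu%:~R) - (v - zv%:~R) by ring.
exact: ler_normB.
Qed.

Lemma distZd_ge0 (R : realType) (d : nat) (z : 'I_d -> R) : 0 <= distZd z.
Proof.
rewrite /distZd; elim/big_ind: _ => //= [a b ha hb|i _]; last exact: distZ_ge0.
by rewrite le_max ha.
Qed.

Lemma distZd_i (R : realType) (d : nat) (z : 'I_d -> R) i : distZ (z i) <= distZd z.
Proof. rewrite /distZd; exact: (le_bigmax 0 (fun i => distZ (z i)) i). Qed.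

Lemma distZd_leP (R : realType) (d : nat) (z : 'I_d -> R) (B : R) :
  0 <= B -> (forall i, distZ (z i) <= B) -> distZd z <= B.
Proof. move=> hB h; rewrite /distZd; apply: bigmax_le => // i _; exact: h. Qed.

Lemma sep (R : realType) (d : nat) (x y : 'I_d -> R) (a b : nat) : (a <= b)%N ->
  distZd (nscale (b - a) x) <=
  distZd (fun i => b%:R * x i + y i) + distZd (fun i => a%:R * x i + y i).
Proof.
move=> hab; apply: distZd_leP; first by rewrite addr_ge0 // distZd_ge0.
move=> i; rewrite /nscale natrB //.
have -> : (b%:R - a%:R) * x i = (b%:R * x i + y i) - (a%:R * x i + y i) by ring.
apply: le_trans (distZ_sub _ _) _.
by apply: lerD; apply: (distZd_i (fun i => _)).
Qed.
Fixpoint mpsi (R : realType) (D : nat -> R) (n0 : nat) (n : nat) : R :=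
  match n with
  | 0 => D n0
  | k.+1 => if (k.+1 <= n0)%N then D n0 else Num.min (mpsi D n0 k) (D k.+1)
  end.

Lemma mpsi_low (R : realType) (D : nat -> R) n0 n : (n <= n0)%N -> mpsi D n0 n = D n0.
Proof. by case: n => [|n] //= ->. Qed.

Lemma mpsi_S (R : realType) (D : nat -> R) n0 n : (n0 <= n)%N ->
  mpsi D n0 n.+1 = Num.min (mpsi D n0 n) (D n.+1).
Proof. by move=> h /=; rewrite leqNgt ltnS h. Qed.

Lemma mpsi_dec1 (R : realType) (D : nat -> R) n0 n : mpsi D n0 n.+1 <= mpsi D n0 n.
Proof.
have [h|h] := leqP n.+1 n0.
  by rewrite !mpsi_low // ltnW.
by rewrite mpsi_S // ge_min lexx.
Qed.

Lemma mpsi_dec (R : realType) (D : nat -> R) n0 m n : (m <= n)%N -> mpsi D n0 n <= mpsi D n0 m.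
Proof.
move=> /subnKC <-; elim: (n - m)%N => [|k IH]; first by rewrite addn0.
by rewrite addnS; apply: le_trans (mpsi_dec1 _ _ _) IH.
Qed.

Lemma mpsi_leD (R : realType) (D : nat -> R) n0 n : (n0 <= n)%N -> mpsi D n0 n <= D n.
Proof.
case: n => [|n]; first by rewrite leqn0 => /eqP ->.
rewrite leq_eqVlt => /orP [/eqP <-|h]; first by rewrite mpsi_low.
by rewrite mpsi_S // ge_min lexx orbT.
Qed.

Lemma mpsi_gt0 (R : realType) (D : nat -> R) n0 :
  (forall m, (n0 <= m)%N -> 0 < D m) -> forall n, 0 < mpsi D n0 n.
Proof.
move=> hD; elim=> [|n IH]; first exact: hD.
have [h|h] := leqP n.+1 n0; first by rewrite mpsi_low // hD.
by rewrite mpsi_S // lt_min IH /= hD // ltnW.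
Qed.

Lemma mpsi_flat (R : realType) (D : nat -> R) n0 a j : (n0 <= a)%N -> (a <= j)%N ->
  (forall m, (a < m <= j)%N -> mpsi D n0 a <= D m) -> mpsi D n0 j = mpsi D n0 a.
Proof.
move=> h0 /subnKC <-; elim: (j - a)%N => [|k IH] hm; first by rewrite addn0.
rewrite addnS mpsi_S; last by apply: leq_trans h0 (leq_addr _ _).
rewrite IH; last by move=> m hm'; apply: hm; lia.
by rewrite (min_idPl _) // hm //; lia.
Qed.
Lemma powle (R : realType) (d : nat) (u v : R) : 0 <= u -> u <= v -> u ^+ d <= v ^+ d.
Proof.
move=> hu huv; apply: lerXn2r => //; rewrite qualifE //=.
exact: le_trans huv.
Qed.

Lemma archi_big (R : realType) (M e : R) : 0 < e -> exists k : nat, M < k%:R * e.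
Proof.
move=> he; exists (Num.Def.archi_bound (`|M| / e)).
have h := archi_boundP (divr_ge0 (normr_ge0 M) (ltW he)).
apply: le_lt_trans (ler_norm M) _.
by rewrite -ltr_pdivrMr.
Qed.

Lemma bad_not_pi (R : realType) (d : nat) (hd : (0 < d)%N) (x y : 'I_d -> R) :
  Bad x -> exists psi, @Dset R d psi /\ ~ @W R d psi (x, y).
Proof.
move=> [c [c0 hc]].
pose D := fun n : nat => distZd (fun i => n%:R * x i + y i).
have D0 n : 0 <= D n by exact: distZd_ge0.
have badab a b : (a < b)%N -> c <= (b - a)%:R * (D b + D a) ^+ d.
  move=> hab; apply: le_trans (hc (b - a)%N _) _; first by rewrite subn_gt0.
  apply: ler_wpM2l => //; apply: powle; first exact: distZd_ge0.
  exact: sep (ltnW hab).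
have [n0 [n0p hn0]] : exists n0, (0 < n0)%N /\ forall m, (n0 <= m)%N -> 0 < D m.
  case: (pselect (exists m, (0 < m)%N /\ D m = 0)) => [[m [m0 hm]]|hno].
    exists m.+1; split => // j hj; rewrite lt_def D0 andbT; apply/eqP => hj0.
    have := badab m j hj; rewrite hj0 hm addr0 expr0n gtn_eqF // mulr0.
    by move=> /(lt_le_trans c0); rewrite ltxx.
  exists 1%N; split => // j hj; rewrite lt_def D0 andbT; apply/eqP => hj0.
  by apply: hno; exists j; split.
pose psi := mpsi D n0.
have psi_pos n : 0 < psi n by exact: mpsi_gt0 hn0 n.
have sum_ge0 a : 0 <= \sum_(1 <= j < a) psi j ^+ d.
  by apply: sumr_ge0 => j _; rewrite exprn_ge0 // ltW.
exists psi; split; last first.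
  move=> /(_ n0) [n [hn hlt]].
  have := mpsi_leD D (ltnW hn); rewrite -/psi => hle.
  by move: hlt; rewrite /= -/(D n) ltNge hle.
split; first by move=> n _; exact: ltW.
split; first by move=> m n _ hmn; exact: mpsi_dec.
case: (pselect (exists a, (n0 <= a)%N /\ forall m, (a < m)%N -> psi a <= D m))
   => [[a [ha hA]]|hB].
  have flat j : (a <= j)%N -> psi j = psi a.
    move=> hj; apply: mpsi_flat => // m /andP [hm _]; exact: hA.
  have vd : 0 < psi a ^+ d by exact: exprn_gt0.
  move=> M; have [k hk] := archi_big M vd.
  exists (a + k)%N.
  rewrite (big_cat_nat _ (n:=a)) /=; [|lia|lia].
  rewrite (eq_big_nat _ _ (m := a) (F2 := fun=> psi a ^+ d)); last first.
    by move=> j /andP [hj _]; rewrite flat.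
  rewrite sumr_const_nat addKn -mulr_natr mulrC.
  have := sum_ge0 a; lra.
have hB' a : (n0 <= a)%N -> exists m, (a < m)%N && (D m < psi a).
  move=> ha; case: (pselect (exists m, (a < m)%N && (D m < psi a))) => // hn.
  exfalso; apply: hB; exists a; split => // m hm; rewrite leNgt; apply/negP => hlt.
  by apply: hn; exists m; rewrite hm hlt.
have c2 : 0 < c / 2 ^+ d by rewrite divr_gt0 // exprn_gt0.
have claim k : exists a, [/\ (n0 <= a)%N, psi a = D a &
    k%:R * (c / 2 ^+ d) <= \sum_(1 <= j < a) psi j ^+ d].
  elim: k => [|k [a [ha hra hs]]].
    by exists n0; split => //; [rewrite /psi mpsi_low | rewrite mul0r sum_ge0].
  have exm := hB' a ha.
  case: (ex_minnP exm) => b /andP [hab hb] hmin.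
  have hflat j : (a <= j < b)%N -> psi j = psi a.
    move=> /andP [h1 h2]; apply: mpsi_flat => // m /andP [hm1 hm2].
    rewrite leNgt; apply/negP => hlt; have := hmin m; rewrite hm1 hlt => /(_ isT).
    lia.
  have hpb : psi b = D b.
    have e := mpsi_S D (n := b.-1) (n0 := n0) ltac:(lia).
    rewrite prednK in e; last by lia.
    rewrite /psi e -/psi hflat; last by lia.
    by apply/min_idPr; exact: ltW.
  exists b; split => //; first by lia.
  rewrite (big_cat_nat _ (n:=a)) /=; [|lia|lia].
  rewrite (eq_big_nat _ _ (m := a) (F2 := fun=> psi a ^+ d)); last first.
    by move=> j hj; rewrite hflat.
  rewrite sumr_const_nat -[psi a ^+ d *+ _]mulr_natr.
  have h1 := badab a b hab.
  have h2 : (D b + D a) ^+ d <= (2 * psi a) ^+ d.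
    apply: powle; first by rewrite addr_ge0.
    rewrite hra; have := ltW hb; rewrite hra; lra.
  rewrite exprMn in h2.
  have h3 : c <= (b - a)%:R * (2 ^+ d * psi a ^+ d).
    apply: le_trans h1 _; apply: ler_wpM2l => //.
  have h4 : c / 2 ^+ d <= psi a ^+ d * (b - a)%:R.
    rewrite ler_pdivrMr ?exprn_gt0 //; apply: le_trans h3 _; rewrite le_eqVlt; apply/orP; left; apply/eqP; ring.
  rewrite -addn1 natrD mulrDl mul1r; exact: lerD.
move=> M; have [k hk] := archi_big M c2.
have [a [_ _ hs]] := claim k.
by exists a; apply: lt_le_trans hs.
Qed.
Lemma psum_mono (R : realType) (f : nat -> R) (hf : forall j, (0 < j)%N -> 0 <= f j) a b :
  (a <= b)%N -> \sum_(1 <= j < a) f j <= \sum_(1 <= j < b) f j.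
Proof.
move=> hab.
have hb c : 0 <= \sum_(1 <= j < c) f j.
  by rewrite big_nat_cond; apply: sumr_ge0 => j /andP [/andP [hj _] _]; exact: hf.
case: a hab => [|a] hab; first by rewrite big_geq.
rewrite (big_cat_nat _ (n := a.+1) (m := 1%N) (p := b)) //=.
rewrite lerDl big_nat_cond; apply: sumr_ge0 => j /andP [/andP [hj _] _]; apply: hf; lia.
Qed.

Lemma tail (R : realType) (e : nat -> R) (he : forall j, e j.+1 <= e j / 2) k l :
  \sum_(k.+1 <= j < (k + l).+1) e j <= 2 * e k.+1 - 2 * e (k + l).+1.
Proof.
elim: l => [|l IH]; first by rewrite addn0 big_geq //; lra.
rewrite addnS big_nat_recr /=; last by lia.
have := he (k + l).+1; lra.
Qed.

Lemma supS (R : realType) (f e : nat -> R) (hf0 : forall j, 0 <= f j)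
  (hfe : forall j, f j <= e j) (he : forall j, e j.+1 <= e j / 2) (he0 : forall j, 0 <= e j) :
  let S := fun m => \sum_(0 <= j < m) f j in
  forall k, S k.+1 <= sup (range S) <= S k.+1 + 2 * e k.+1.
Proof.
move=> S.
have ub k m : S m <= S k.+1 + 2 * e k.+1.
  have [hm|hm] := leqP m k.+1.
    rewrite /S (big_cat_nat _ (n := m) (m := 0%N) (p := k.+1)) //=.
    have h1 : 0 <= \sum_(m <= j < k.+1) f j by exact: sumr_ge0.
    have := he0 k.+1; lra.
  rewrite /S (big_cat_nat _ (n := k.+1) (m := 0%N) (p := m)) //=; last exact: ltnW.
  rewrite lerD2l.
  have -> : m = (k + (m - k.+1)).+1 by lia.
  apply: le_trans (ler_sum_nat (G := e) _) _; first by move=> j _; exact: hfe.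
  have := tail he k (m - k.+1); have := he0 (k + (m - k.+1)).+1; lra.
have hs : has_sup (range S).
  split; first by exists (S 0%N), 0%N.
  by exists (S 1%N + 2 * e 1%N) => _ [m _ <-]; exact: ub.
move=> k; apply/andP; split.
  by apply: sup_upper_bound => //; exists k.+1.
apply: ge_sup; first by exists (S 0%N), 0%N.
by move=> _ [m _ <-]; exact: ub.
Qed.

Lemma block (R : realType) (d : nat) (psi : nat -> R) (ns : nat -> nat) (dl : nat -> R) (K : nat) :
  (forall n, (0 < n)%N -> 0 <= psi n) ->
  (forall m n, (0 < m)%N -> (m <= n)%N -> psi n <= psi m) ->
  (forall k, (ns k < ns k.+1)%N) -> (0 < ns 0)%N ->
  (forall k, (K <= k)%N -> psi (ns k) <= dl k) ->
  (forall k, (ns k.+1)%:R * dl k ^+ d <= (2^-1) ^+ k) ->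
  exists M, forall N, \sum_(1 <= j < N) psi j ^+ d <= M.
Proof.
move=> hp0 hmon hns hns0 hK hb.
have nsk k : (k < ns k)%N.
  elim: k => [|k IH] //; exact: leq_ltn_trans IH (hns k).
have nsmon a b : (a <= b)%N -> (ns a <= ns b)%N.
  move=> /subnKC <-; elim: (b - a)%N => [|l IH]; first by rewrite addn0.
  by rewrite addnS; apply: leq_trans IH (ltnW (hns _)).
pose T k := \sum_(1 <= j < ns k) psi j ^+ d.
have claim l : T (K + l)%N <= T K + 2 - 2 * (2^-1) ^+ (K + l).
  elim: l => [|l IH].
    rewrite addn0; have : (2^-1 : R) ^+ K <= 1 by rewrite exprn_ile1 //; lra.
    lra.
  rewrite /T addnS (big_cat_nat _ (n := ns (K + l)%N)) /=; last 2 first.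
  - by have := nsk (K + l)%N; lia.
  - exact: ltnW.
  have hd0 : 0 <= psi (ns (K + l)%N) by apply: hp0; have := nsk (K + l)%N; lia.
  have hdl : psi (ns (K + l)%N) <= dl (K + l)%N by apply: hK; lia.
  have h2 : \sum_(ns (K + l)%N <= j < ns (K + l)%N.+1) psi j ^+ d <= dl (K + l)%N ^+ d *+ (ns (K + l)%N.+1 - ns (K + l)%N).
    rewrite -sumr_const_nat; apply: ler_sum_nat => j /andP [hj1 hj2].
    apply: powle; first by apply: hp0; have := nsk (K + l)%N; lia.
    apply: le_trans hdl; apply: hmon => //; have := nsk (K + l)%N; lia.
  have h3 : dl (K + l)%N ^+ d *+ (ns (K + l)%N.+1 - ns (K + l)%N) <= (2^-1) ^+ (K + l).
    apply: le_trans (hb (K + l)%N); rewrite -mulr_natr mulrC.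
    apply: ler_wpM2r; first by apply: exprn_ge0; exact: le_trans hdl.
    by rewrite ler_nat leq_subr.
  rewrite exprS.
  move: IH; rewrite /T => IH; lra.
exists (T K + 2) => N.
apply: le_trans (psum_mono (f := fun j => psi j ^+ d) _ (b := ns (K + N)%N) _) _.
- by move=> j hj; apply: exprn_ge0; exact: hp0.
- by have := nsk (K + N)%N; lia.
have := claim N; have : 0 <= (2^-1 : R) ^+ (K + N) by apply: exprn_ge0; lra.
rewrite /T; lra.
Qed.
Lemma maxpn (R : realType) (t : R) : Num.max t 0 - Num.max (- t) 0 = t /\ 0 <= Num.max t 0 <= `|t| /\ 0 <= Num.max (-t) 0 <= `|t|.
Proof.
case: (boolP (0 <= t)) => h.
  rewrite (max_idPl h) (max_idPr _); last by rewrite oppr_le0.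
  rewrite ger0_norm //; split; [ring|split; apply/andP; split => //; lra].
rewrite -ltNge in h.
rewrite (max_idPr (ltW h)) (max_idPl _); last by rewrite oppr_ge0 ltW.
rewrite ltr0_norm //; split; [ring|split; apply/andP; split => //; lra].
Qed.
Lemma intr_sumn (R : realType) (z : nat -> int) m : ((\sum_(0 <= j < m) z j)%:~R : R) = \sum_(0 <= j < m) (z j)%:~R.
Proof. elim: m => [|m IH]; first by rewrite !big_geq. by rewrite !big_nat_recr //= intrD IH. Qed.

Definition rnd (R : realType) (t : R) : int :=
  if t - (Num.floor t)%:~R <= (Num.floor t)%:~R + 1 - t then Num.floor t
  else Num.floor t + 1.

Lemma rnd_dist (R : realType) (t : R) : `|t - (rnd t)%:~R| = distZ t.
Proof.
rewrite /rnd /distZ.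
have h2 := floor_le t.
have := floorD1_gt t; rewrite intrD => h3.
case: ifP => hm.
  by rewrite (min_idPl hm) ger0_norm //; lra.
move/negbT: hm; rewrite -ltNge => hm.
by rewrite (min_idPr (ltW hm)) intrD distrC ger0_norm //; lra.
Qed.

Definition etaq (R : realType) (d : nat) (x : 'I_d -> R) (q : nat) : R := distZd (nscale q x).

Definition epsk (R : realType) (d : nat) (n : nat) (h : R) (k : nat) : R :=
  Num.min ((h / 2) ^+ d) ((2^-1) ^+ k / (n.+1%:R * 2 ^+ d)).

Fixpoint sq (R : realType) (d : nat) (x : 'I_d -> R) (Q : R -> nat) (k : nat) : nat * nat :=
  match k with
  | 0 => (Q 1, Q 1)
  | k'.+1 => let p := sq x Q k' in
     if etaq x p.2 == 0 then ((p.1 + p.2)%N, p.2)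
     else let q' := Q (epsk d p.1 (etaq x p.2) k') in ((p.1 + q')%N, q')
  end.

Lemma sq_n (R : realType) (d : nat) (x : 'I_d -> R) (Q : R -> nat) k :
  (sq x Q k.+1).1 = ((sq x Q k).1 + (sq x Q k.+1).2)%N.
Proof. by rewrite /=; case: ifP. Qed.

Lemma sq_sum (R : realType) (d : nat) (x : 'I_d -> R) (Q : R -> nat) k :
  (sq x Q k).1 = (\sum_(0 <= j < k.+1) (sq x Q j).2)%N.
Proof.
elim: k => [|k IH]; first by rewrite big_nat1.
by rewrite big_nat_recr //= -IH -sq_n.
Qed.

Lemma eps_pos (R : realType) (d : nat) n (h : R) k : 0 < h -> 0 < epsk d n h k.
Proof.
move=> hp; rewrite lt_min; apply/andP; split; first by apply: exprn_gt0; lra.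
rewrite divr_gt0 // ?mulr_gt0 ?exprn_gt0 //; lra.
Qed.

Lemma sq_pos (R : realType) (d : nat) (x : 'I_d -> R) (Q : R -> nat)
  (HQ : forall e, 0 < e -> (0 < Q e)%N /\ (Q e)%:R * etaq x (Q e) ^+ d < e) k :
  (0 < (sq x Q k).2)%N.
Proof.
elim: k => [|k' IH]; first by have [] := HQ 1 ltr01.
rewrite /=; case: ifP => // hne.
apply: (proj1 (HQ _ _)); apply: eps_pos.
have := distZd_ge0 (nscale (sq x Q k').2 x); move/negbT: hne.
by rewrite /etaq lt_def => ->.
Qed.

Lemma sq_half (R : realType) (d : nat) (hd : (0 < d)%N) (x : 'I_d -> R) (Q : R -> nat)
  (HQ : forall e, 0 < e -> (0 < Q e)%N /\ (Q e)%:R * etaq x (Q e) ^+ d < e) k :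
  etaq x (sq x Q k.+1).2 <= etaq x (sq x Q k).2 / 2.
Proof.
have eta0 q : 0 <= etaq x q by exact: distZd_ge0.
rewrite /=; case: ifP => [/eqP -> |hne]; first by rewrite mul0r.
set h := etaq x (sq x Q k).2.
have hp : 0 < h by have := eta0 (sq x Q k).2; move/negbT: hne; rewrite -/h lt_def => ->.
set e := epsk d (sq x Q k).1 h k.
have he : 0 < e by exact: eps_pos.
have [hq1 hq2] := HQ e he.
rewrite /=.
set q := Q e in hq1 hq2 *.
have hq : 1 <= (q%:R : R) by rewrite ler1n.
have a0 : 0 <= etaq x q ^+ d by apply: exprn_ge0.
have h1 : etaq x q ^+ d < (h / 2) ^+ d.
  apply: (le_lt_trans _ (lt_le_trans hq2 _)).
    by rewrite -{1}(mul1r (etaq x q ^+ d)); apply: ler_wpM2r.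
  by rewrite ge_min lexx.
rewrite leNgt; apply/negP => h3.
have h20 : 0 <= h / 2 by lra.
have := powle d h20 (ltW h3) => h4.
by have := lt_le_trans h1 h4; rewrite ltxx.
Qed.

Lemma sq_bound (R : realType) (d : nat) (hd : (0 < d)%N) (x : 'I_d -> R) (Q : R -> nat)
  (HQ : forall e, 0 < e -> (0 < Q e)%N /\ (Q e)%:R * etaq x (Q e) ^+ d < e) k :
  ((sq x Q k.+1).1)%:R * (2 * etaq x (sq x Q k.+1).2) ^+ d <= (2^-1) ^+ k.
Proof.
have eta0 q : 0 <= etaq x q by exact: distZd_ge0.
have hu : 0 < (2^-1 : R) ^+ k by apply: exprn_gt0; lra.
rewrite /=; case: ifP => [/eqP heq|hne].
  by rewrite /= heq mulr0 expr0n gtn_eqF // mulr0 ltW.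
set h := etaq x (sq x Q k).2.
have hp : 0 < h by have := eta0 (sq x Q k).2; move/negbT: hne; rewrite -/h lt_def => ->.
set n := (sq x Q k).1.
set e := epsk d n h k.
have he : 0 < e by exact: eps_pos.
have [hq1 hq2] := HQ e he.
rewrite /=.
set q := Q e in hq1 hq2 *.
set a := etaq x q ^+ d in hq2 *.
have a0 : 0 <= a by apply: exprn_ge0.
have hq : 1 <= (q%:R : R) by rewrite ler1n.
have haq : a <= q%:R * a by rewrite -{1}(mul1r a); apply: ler_wpM2r.
have P0 : 0 < (2 : R) ^+ d by apply: exprn_gt0.
have n10 : 0 < (n.+1%:R : R) by rewrite ltr0n.
have he2 : e * (n.+1%:R * 2 ^+ d) <= (2^-1) ^+ k.
  rewrite -ler_pdivlMr ?mulr_gt0 //.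
  by rewrite /e /epsk ge_min lexx orbT.
have hna : n%:R * a <= n%:R * e by apply: ler_wpM2l => //; apply: ltW; lra.
have h5 : n%:R * a + q%:R * a <= n%:R * e + e by lra.
apply: le_trans he2.
rewrite natrD exprMn.
have -> : (n%:R + q%:R) * (2 ^+ d * a) = 2 ^+ d * (n%:R * a + q%:R * a) by ring.
have -> : e * (n.+1%:R * 2 ^+ d) = 2 ^+ d * (n%:R * e + e) by rewrite -addn1 natrD; ring.
by apply: ler_wpM2l => //; exact: ltW.
Qed.

Lemma wa_pi (R : realType) (d : nat) (hd : (0 < d)%N) (x : 'I_d -> R) :
  WA x -> piPi x.
Proof.
move=> hWA; have hWA' : ~ Bad x := hWA.
have hex : forall eps : R, exists q : nat, 0 < eps -> (0 < q)%N /\ q%:R * etaq x q ^+ d < eps.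
  move=> eps; case: (pselect (0 < eps)) => he; last by exists 0%N.
  case: (pselect (exists q, (0 < q)%N /\ q%:R * etaq x q ^+ d < eps)) => [[q hq]|hn].
    by exists q.
  exfalso; apply: hWA'; exists eps; split => // n hn0; rewrite leNgt; apply/negP => hlt.
  by apply: hn; exists n; split.
case: (choice hex) => Q HQ.
pose e j := etaq x (sq x Q j).2.
have e0 j : 0 <= e j by exact: distZd_ge0.
have eh j : e j.+1 <= e j / 2 by have := sq_half hd HQ j.
pose t j i := ((sq x Q j).2)%:R * x i - (rnd (((sq x Q j).2)%:R * x i))%:~R.
have tn j i : `|t j i| <= e j.
  by rewrite /t rnd_dist; exact: (distZd_i (nscale _ x) i).
pose fp i j := Num.max (t j i) 0.
pose fn i j := Num.max (- t j i) 0.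
pose A i := sup (range (fun m => \sum_(0 <= j < m) fp i j)).
pose B i := sup (range (fun m => \sum_(0 <= j < m) fn i j)).
pose y i := B i - A i.
exists (x, y) => //.
move=> psi [hp0 [hmon hdiv]] N.
case: (pselect (exists n, (N < n)%N /\ distZd (fun i => n%:R * x i + y i) < psi n))
  => [[n [h1 h2]]|hno]; first by exists n.
exfalso.
have hD k : distZd (fun i => ((sq x Q k).1)%:R * x i + y i) <= 2 * e k.+1.
  apply: distZd_leP; first by have := e0 k.+1; lra.
  move=> i.
  have hfp0 j : 0 <= fp i j by have [_ [/andP [h _] _]] := maxpn (t j i).
  have hfpe j : fp i j <= e j.
    by have [_ [/andP [_ h] _]] := maxpn (t j i); apply: le_trans h (tn j i).
  have hfn0 j : 0 <= fn i j by have [_ [_ /andP [h _]]] := maxpn (t j i).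
  have hfne j : fn i j <= e j.
    by have [_ [_ /andP [_ h]]] := maxpn (t j i); apply: le_trans h (tn j i).
  move: (supS hfp0 hfpe eh e0) => /= /(_ k) /andP [hA1 hA2].
  move: (supS hfn0 hfne eh e0) => /= /(_ k) /andP [hB1 hB2].
  apply: le_trans (distZ_le _ (\sum_(0 <= j < k.+1) rnd (((sq x Q j).2)%:R * x i))) _.
  have -> : ((sq x Q k).1)%:R * x i + y i - (\sum_(0 <= j < k.+1) rnd (((sq x Q j).2)%:R * x i))%:~R
      = (\sum_(0 <= j < k.+1) fp i j - A i) - (\sum_(0 <= j < k.+1) fn i j - B i).
    rewrite intr_sumn sq_sum natr_sum mulr_suml.
    have -> : \sum_(0 <= j < k.+1) ((sq x Q j).2)%:R * x i =
        \sum_(0 <= j < k.+1) (fp i j - fn i j + (rnd (((sq x Q j).2)%:R * x i))%:~R).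
      apply: eq_big_nat => j _; have [h _] := maxpn (t j i).
      rewrite /fp /fn h /t; ring.
    rewrite big_split sumrB /y /=; ring.
  rewrite /A /B; move: hA1 hA2 hB1 hB2 => /= hA1 hA2 hB1 hB2.
  rewrite ler_norml; apply/andP; split; lra.
have hns k : ((sq x Q k).1 < (sq x Q k.+1).1)%N.
  by rewrite sq_n; have := sq_pos HQ k.+1; lia.
have hnsk k : (k < (sq x Q k).1)%N.
  elim: k => [|k IH]; first exact: (sq_pos HQ 0).
  exact: leq_ltn_trans IH (hns k).
have hK k : (N <= k)%N -> psi (sq x Q k).1 <= 2 * e k.+1.
  move=> hk; apply: le_trans (hD k); rewrite leNgt; apply/negP => hlt.
  by apply: hno; exists (sq x Q k).1; split => //; have := hnsk k; lia.
have [M hM] := block (ns := fun k => (sq x Q k).1) (dl := fun k => 2 * e k.+1) (K := N)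
   hp0 hmon hns (sq_pos HQ 0) hK (sq_bound hd HQ).
have [N' hN'] := hdiv M.
by have := hM N'; lra.
Qed.

Theorem theorem1 (R : realType) (d : nat) (hd : (0 < d)%N) :
  @WA R d = @piPi R d /\ @Bad R d = ~` @piPi R d.
Proof.
have e1 : @WA R d = @piPi R d.
  apply/seteqP; split => x hx; first exact: wa_pi.
  case: hx => [[x' y] hp /= hx']; subst x' => hbad.
  have [psi [hpsi hW]] := bad_not_pi hd y hbad.
  by apply: hW; exact: hp psi hpsi.
by split => //; rewrite -e1 /WA setCK.
Qed.
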